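(* Let $n \geq 2k \geq 4$. Suppose that $\mathcal F, \mathcal G \subset \binom{[n]}{k}$ are non-trivial, cross-intersecting, initial families. Then $$|\mathcal F| + |\mathcal G| \leq k+1 + \sum_{2 \leq i \leq k} \binom{k+1}{i}\binom{n-k-1}{k-i}.$$
   Context: $\binom{[n]}{k}$ is the collection of $k$-subsets of $[n]=\{1,\dots,n\}$. Families $\mathcal F,\mathcal G$ are cross-intersecting if $F\cap G\neq\emptyset$ for all $F\in\mathcal F$, $G\in\mathcal G$. A (non-empty) family is non-trivial if the intersection of all its members is empty. For $k$-sets $A=\{x_1<\dots<x_k\}$ and $B=\{y_1<\dots<y_k\}$ write $A \prec B$ if $x_i \leq y_i$ for all $1\le i\le k$. A family $\mathcal F\subset\binom{[n]}{k}$ is initial (shifted) if $A \prec B$ and $B\in\mathcal F$ imply $A \in \mathcal F$. *)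

(* Defs.v *)
From mathcomp Require Import all_boot all_order.
Set Implicit Arguments. Unset Strict Implicit. Unset Printing Implicit Defensive.

(* Ground set [n] is modelled by 'I_n = {0,...,n-1} (a relabelling i |-> i+1). *)

Definition sorted_elems (n : nat) (A : {set 'I_n}) : seq nat :=
  sort leq [seq val x | x <- enum A].

(* A ≺ B : both have the same size and x_i <= y_i for all i. *)
Definition shift_le (n : nat) (A B : {set 'I_n}) : bool :=
  all2 leq (sorted_elems A) (sorted_elems B).

Definition uniform (n k : nat) (FF : {set {set 'I_n}}) : Prop :=
  forall F, F \in FF -> #|F| = k.

Definition cross_intersecting (n : nat) (FF GG : {set {set 'I_n}}) : Prop :=
  forall F G, F \in FF -> G \in GG -> F :&: G != set0.

Definition non_trivial (n : nat) (FF : {set {set 'I_n}}) : Prop :=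
  FF != set0 /\ \bigcap_(F in FF) F = set0.

Definition initial (n k : nat) (FF : {set {set 'I_n}}) : Prop :=
  forall A B : {set 'I_n}, #|A| = k -> #|B| = k ->
    shift_le A B -> B \in FF -> A \in FF.

(* Main.v *)
Require Import Defs.
From mathcomp Require Import all_boot all_order.
From mathcomp Require Import zify.
Set Implicit Arguments. Unset Strict Implicit. Unset Printing Implicit Defensive.

Definition lt_set (n t : nat) : {set 'I_n} := [set x : 'I_n | x < t].

Lemma in_lt_set n t (x : 'I_n) : (x \in lt_set n t) = (x < t).
Proof. by rewrite inE. Qed.

Lemma card_lt_set n t : #|lt_set n t| = minn t n.
Proof.
have le : minn t n <= n by apply: geq_minr.
have inj : injective (widen_ord le) by move=> a b /(congr1 val) /= /val_inj.
rewrite -[minn t n]card_ord -(card_imset _ inj).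
apply: eq_card => x; rewrite in_lt_set.
apply/idP/imsetP.
  move=> xt; have xm : x < minn t n by rewrite leq_min xt ltn_ord.
  by exists (Ordinal xm) => //; apply: val_inj.
by case=> y _ ->; rewrite /= (leq_trans (ltn_ord y)) // geq_minl.
Qed.

Lemma count_sorted_elems n (A : {set 'I_n}) t :
  count (fun x => x < t) (sorted_elems A) = #|A :&: lt_set n t|.
Proof.
rewrite /sorted_elems.
have E := elimT permP (permEl (perm_sort leq [seq val x | x <- enum A])).
rewrite E.
rewrite count_map cardE (perm_size (enum_setI A (lt_set n t))) size_filter.
by apply: eq_count => x; rewrite /= in_lt_set.
Qed.

Lemma size_sorted_elems n (A : {set 'I_n}) : size (sorted_elems A) = #|A|.
Proof. by rewrite /sorted_elems size_sort size_map cardE. Qed.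

Lemma sorted_sorted_elems n (A : {set 'I_n}) : sorted leq (sorted_elems A).
Proof. by rewrite /sorted_elems; apply: sort_sorted; exact: leq_total. Qed.

Lemma all2_count (s1 s2 : seq nat) :
  sorted leq s1 -> sorted leq s2 -> size s1 = size s2 ->
  (forall t, count (fun x => x < t) s2 <= count (fun x => x < t) s1) ->
  all2 leq s1 s2.
Proof.
elim: s1 s2 => [|a r IH] [|b q] //= so1 so2 [] sz H.
have ar := order_path_min leq_trans so1.
have bq := order_path_min leq_trans so2.
have ab : a <= b.
  have := H b.+1; rewrite ltnSn /=.
  case: leqP => // ba.
  rewrite add0n.
  have -> : count (fun x => x < b.+1) r = 0.
    apply/eqP; rewrite -leqn0 leqNgt -has_count; apply/hasPn => x xr /=.
    by rewrite -leqNgt (leq_trans ba) //; move/allP: ar => /(_ x xr).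
  by [].
rewrite ab /=; apply: IH => //; first exact: path_sorted so1.
  exact: path_sorted so2.
move=> t; have := H t.
case: (ltnP b t) => bt.
  by rewrite (leq_ltn_trans ab bt) !add1n ltnS.
have -> : count (fun x => x < t) q = 0.
  apply/eqP; rewrite -leqn0 leqNgt -has_count; apply/hasPn => x xq /=.
  by rewrite -leqNgt (leq_trans bt) //; move/allP: bq => /(_ x xq).
by [].
Qed.

Lemma shift_le_count n (A B : {set 'I_n}) :
  #|A| = #|B| ->
  (forall t, #|B :&: lt_set n t| <= #|A :&: lt_set n t|) -> shift_le A B.
Proof.
move=> AB H; apply: all2_count; rewrite ?sorted_sorted_elems //.
  by rewrite !size_sorted_elems.
by move=> t; rewrite !count_sorted_elems.
Qed.

Definition shifted n (G : {set {set 'I_n}}) :=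
  forall X (x y : 'I_n), X \in G -> x \in X -> y \notin X -> y < x ->
    (y |: (X :\ x)) \in G.

Lemma card_shift n (X : {set 'I_n}) (x y : 'I_n) :
  x \in X -> y \notin X -> #|y |: (X :\ x)| = #|X|.
Proof.
move=> xX yX; rewrite cardsU1 (cardsD1 x X) xX !inE.
by rewrite (negbTE yX) andbF.
Qed.

Lemma initial_shifted n k (G : {set {set 'I_n}}) :
  uniform k G -> initial k G -> shifted G.
Proof.
move=> uG iG X x y XG xX yX yx.
have cX := uG X XG.
apply: (iG _ X) => //; first by rewrite card_shift.
apply: shift_le_count; first by rewrite card_shift.
move=> t; case: (ltnP x t) => xt.
  rewrite (cardsD1 x (X :&: lt_set n t)) !inE xX xt /=.
  have -> : 1 + #|(X :&: lt_set n t) :\ x| = #|y |: ((X :&: lt_set n t) :\ x)|.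
    by rewrite cardsU1 !inE (negbTE yX) /= andbF.
  apply: subset_leq_card; apply/subsetP => z; rewrite !inE.
  case/orP=> [/eqP -> | /andP [zx /andP [zX zt]]]; first by rewrite eqxx /= (ltn_trans yx xt).
  by rewrite zx zX zt /= orbT.
apply: subset_leq_card; apply/subsetP => z; rewrite !inE => /andP [zX zt].
rewrite zX zt andbT; apply/orP; right; rewrite andbT; apply/eqP => zx.
by move: zt; rewrite zx ltnNge xt.
Qed.

Definition HPset n N j (P : pred {set 'I_n}) : {set {set 'I_n}} :=
  [set X : {set 'I_n} | (X \subset lt_set n N) && (#|X| == j) && P X].
Arguments HPset n N j P : clear implicits.

Definition Hcomp n (P : pred {set 'I_n}) (N j : nat) : Prop :=
  forall (m : nat) (X Y : {set 'I_n}), m <= j ->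
   X \subset lt_set n (2*m) -> #|X| = m ->
   (forall y : 'I_n, y \in Y -> (2*m <= y) && (y < N)) -> #|Y| + m = j ->
   P (X :|: Y) -> P ((lt_set n (2*m) :\: X) :|: Y).

Definition memb n N j (F : {set {set 'I_n}}) :=
  forall X, X \in F -> (X \subset lt_set n N) /\ #|X| = j.

Lemma sub_HP n N j P (F : {set {set 'I_n}}) :
  memb N j F -> [set X in F | P X] \subset HPset n N j P.
Proof.
move=> mF; apply/subsetP => X; rewrite !inE => /andP [XF PX].
by have [-> ->] := mF X XF; rewrite eqxx PX.
Qed.

Lemma L0 n N P (F G : {set {set 'I_n}}) :
  memb N 0 F -> memb N 0 G -> cross_intersecting F G ->
  #|[set X in F | P X]| + #|[set X in G | P X]| <= #|HPset n N 0 P|.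
Proof.
move=> mF mG cFG.
case: (set_0Vmem [set X in F | P X]) => [-> | [X]].
  by rewrite cards0 add0n subset_leq_card // sub_HP.
case: (set_0Vmem [set X in G | P X]) => [-> | [Y]].
  by rewrite cards0 addn0 subset_leq_card // sub_HP.
rewrite !inE => /andP [YG _] /andP [XF _].
have := cFG X Y XF YG.
have [_ /cards0_eq ->] := mF X XF.
by have [_ /cards0_eq ->] := mG Y YG; rewrite setI0 eqxx.
Qed.

Lemma Lbase n j P (F G : {set {set 'I_n}}) :
  2*j <= n ->
  memb (2*j) j F -> memb (2*j) j G -> cross_intersecting F G -> Hcomp P (2*j) j ->
  #|[set X in F | P X]| + #|[set X in G | P X]| <= #|HPset n (2*j) j P|.
Proof.
move=> jn mF mG cFG Hc.
set A := [set X in F | P X]; set B := [set X in G | P X].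
set c := fun Y : {set 'I_n} => lt_set n (2*j) :\: Y.
have subG : forall Y, Y \in B -> Y \subset lt_set n (2*j).
  by move=> Y; rewrite inE => /andP [/mG [] ].
have cinj : {in B &, injective c}.
  move=> Y1 Y2 Y1B Y2B e.
  have := congr1 (fun Z => lt_set n (2*j) :\: Z) e; rewrite /c !setDDr !setDv !set0U.
  by rewrite (setIidPr (subG _ Y1B)) (setIidPr (subG _ Y2B)).
rewrite -(card_in_imset cinj).
have dis : A :&: (c @: B) = set0.
  apply/setP => Z; rewrite !inE; apply/negP => /andP [/andP [ZF _] /imsetP [Y YB eZ]].
  move: YB; rewrite inE => /andP [YG _].
  have := cFG Z Y ZF YG; case/set0Pn => z; rewrite eZ !inE.
  by case/andP => /andP [/negP].
have -> : #|A| + #|c @: B| = #|A :|: c @: B| by rewrite cardsU dis cards0 subn0.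
apply: subset_leq_card; apply/subsetP => Z; rewrite inE => /orP [ZA | /imsetP [Y YB ->]].
  by apply: (subsetP (sub_HP P mF)).
have YB' := YB; move: YB'; rewrite inE => /andP [YG PY].
have [Ysub cY] := mG Y YG.
rewrite inE subsetDl /=; apply/andP; split.
  by rewrite cardsD (setIidPr Ysub) card_lt_set cY (minn_idPl jn) mul2n -addnn addnK.
have := Hc j Y set0 (leqnn j) Ysub cY; rewrite !setU0 /c; apply => //.
  by move=> y; rewrite inE.
by rewrite cards0.
Qed.

Section Step.
Variables (n N : nat) (e : 'I_n).
Hypothesis eN : val e = N.

Lemma lt_pred (z : 'I_n) : z \in lt_set n N.+1 -> z != e -> z \in lt_set n N.
Proof.
rewrite !in_lt_set ltnS leq_eqVlt => /orP [/eqP ze | //].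
by rewrite -val_eqE /= ze eN eqxx.
Qed.

Lemma memb0 j (F : {set {set 'I_n}}) :
  memb N.+1 j F -> memb N j [set X in F | e \notin X].
Proof.
move=> mF X; rewrite inE => /andP [XF eX]; have [sX cX] := mF X XF.
split => //; apply/subsetP => z zX; apply: lt_pred; first exact: (subsetP sX).
by apply/eqP => ze; move: eX; rewrite -ze zX.
Qed.

Lemma memb1 j (F : {set {set 'I_n}}) :
  memb N.+1 j.+1 F -> memb N j ((fun X => X :\ e) @: [set X in F | e \in X]).
Proof.
move=> mF Z /imsetP [X]; rewrite inE => /andP [XF eX] ->.
have [sX cX] := mF X XF; split.
  apply/subsetP => z /setD1P [ze zX]; apply: lt_pred => //.
  exact: (subsetP sX).
by move: cX; rewrite (cardsD1 e X) eX add1n => [[]].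
Qed.

Lemma shifted0 j (G : {set {set 'I_n}}) :
  memb N.+1 j G -> shifted G -> shifted [set X in G | e \notin X].
Proof.
move=> mG sG X x y; rewrite !inE => /andP [XG eX] xX yX yx.
rewrite sG //=; apply/negP => /orP [/eqP ey | /andP [_ eX']].
  have [sX _] := mG X XG.
  have := lt_pred (subsetP sX x xX).
  have xe : x != e by apply/eqP => xe; move: eX; rewrite -xe xX.
  move=> /(_ xe); rewrite in_lt_set -eN ey => xy.
  by move: (ltn_trans yx xy); rewrite ltnn.
by move: eX; rewrite eX'.
Qed.

Lemma shifted1 j (G : {set {set 'I_n}}) :
  memb N.+1 j G -> shifted G -> shifted ((fun X => X :\ e) @: [set X in G | e \in X]).
Proof.
move=> mG sG Z x y /imsetP [X]; rewrite inE => /andP [XG eX] -> xZ yZ yx.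
move: xZ; rewrite !inE => /andP [xe xX].
have [sX _] := mG X XG.
have := lt_pred (subsetP sX x xX) xe; rewrite in_lt_set => xN.
have ye : y != e.
  by apply/eqP => ye; move: (ltn_trans yx xN); rewrite ye eN ltnn.
have yX : y \notin X by move: yZ; rewrite !inE ye.
apply/imsetP; exists (y |: (X :\ x)).
  rewrite inE sG //= !inE; apply/orP; right; rewrite eX andbT.
  by rewrite eq_sym.
apply/setP => z; rewrite !inE.
case: (eqVneq z y) => [-> | zy] /=; first by rewrite ye.
by rewrite andbCA.
Qed.

Lemma cross1 j (F G : {set {set 'I_n}}) :
  N <= n -> 2*j.+1 <= N ->
  memb N.+1 j.+1 F -> memb N.+1 j.+1 G -> shifted G -> cross_intersecting F G ->
  cross_intersecting ((fun X => X :\ e) @: [set X in F | e \in X])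
                     ((fun X => X :\ e) @: [set X in G | e \in X]).
Proof.
move=> Nn jN mF mG sG cFG X' Y' /imsetP [X]; rewrite inE => /andP [XF eX] ->.
move=> /imsetP [Y]; rewrite inE => /andP [YG eY] ->.
apply/negP => /eqP H0.
have [_ cX] := mF X XF; have [_ cY] := mG Y YG.
have cX' : #|X :\ e| = j by move: cX; rewrite (cardsD1 e X) eX add1n => [[]].
have cY' : #|Y :\ e| = j by move: cY; rewrite (cardsD1 e Y) eY add1n => [[]].
have : ~~ (lt_set n N \subset (X :\ e) :|: (Y :\ e)).
  apply/negP => /subset_leq_card; rewrite card_lt_set (minn_idPl Nn).
  move=> H; have := leq_trans H (leq_card_setU _ _); rewrite cX' cY' addnn -mul2n.
  move=> ?; lia.
case/subsetPn => y; rewrite in_lt_set !inE negb_or => yN /andP [yX' yY'].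
have ye : y != e by apply/eqP => ye; move: yN; rewrite ye eN ltnn.
have yY : y \notin Y by move: yY'; rewrite ye.
have ylt : y < e by rewrite eN.
have := cFG X _ XF (sG Y e y YG eY yY ylt).
case/set0Pn => z; rewrite !inE => /andP [zX /orP [/eqP zy | /andP [ze zY]]].
  by move: yX'; rewrite ye /= -zy zX.
have : z \in (X :\ e) :&: (Y :\ e) by rewrite !inE ze zX zY.
by rewrite H0 inE.
Qed.

Lemma Hcomp0 (P : pred {set 'I_n}) j : Hcomp P N.+1 j -> Hcomp P N j.
Proof.
move=> H m X Y mj sX cX Yel cY PXY; apply: H => // y /Yel /andP [-> /ltnW].
by rewrite ltnS.
Qed.

Lemma notin_lt (Y : {set 'I_n}) : (forall y : 'I_n, y \in Y -> y < N) -> e \notin Y.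
Proof. by move=> H; apply/negP => /H; rewrite eN ltnn. Qed.

Lemma Hcomp1 (P : pred {set 'I_n}) j : 2*j.+1 <= N -> Hcomp P N.+1 j.+1 ->
  Hcomp (fun X => P (e |: X)) N j.
Proof.
move=> jN H m X Y mj sX cX Yel cY PXY.
have eY : e \notin Y by apply: notin_lt => y /Yel /andP [].
rewrite /= setUCA; apply: H => //.
- by apply: leq_trans mj _.
- move=> y; rewrite !inE => /orP [/eqP -> | /Yel /andP [-> /ltnW]]; last by rewrite ltnS.
  rewrite eN ltnSn andbT; lia.
- by rewrite cardsU1 eY add1n addSn cY.
- by rewrite setUCA.
Qed.

Lemma cnt_split (P : pred {set 'I_n}) (F : {set {set 'I_n}}) :
  #|[set X in F | P X]| <= #|[set X in [set X in F | e \notin X] | P X]|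
     + #|[set X in (fun X => X :\ e) @: [set X in F | e \in X] | P (e |: X)]|.
Proof.
rewrite -(cardsID [set X : {set 'I_n} | e \in X] [set X in F | P X]) addnC.
apply: leq_add.
  apply: subset_leq_card; apply/subsetP => X; rewrite !inE.
  by move=> /and3P [-> -> ->].
have inj : {in [set X in F | P X] :&: [set X : {set 'I_n} | e \in X] &,
   injective (fun X => X :\ e)}.
  move=> X1 X2; rewrite !inE => /andP [_ e1] /andP [_ e2] E.
  by rewrite -(setD1K e1) -(setD1K e2) E.
rewrite -(card_in_imset inj); apply: subset_leq_card; apply/subsetP => Z.
case/imsetP => X; rewrite !inE => /andP [/andP [XF PX] eX] ->.
rewrite (setD1K eX) PX andbT; apply/imsetP; exists X => //.
by rewrite inE XF eX.
Qed.

Lemma hP_split (P : pred {set 'I_n}) j :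
  #|HPset n N j.+1 P| + #|HPset n N j (fun X => P (e |: X))|
    <= #|HPset n N.+1 j.+1 P|.
Proof.
rewrite -(cardsID [set X : {set 'I_n} | e \in X] (HPset n N.+1 j.+1 P)) [X in _ <= X]addnC.
apply: leq_add.
  apply: subset_leq_card; apply/subsetP => X; rewrite !inE.
  move=> /andP [/andP [sX cX] PX]; rewrite cX PX !andbT; apply/andP; split.
    by apply: notin_lt => y /(subsetP sX); rewrite in_lt_set.
  by apply: subset_trans sX _; apply/subsetP => z; rewrite !in_lt_set => /ltnW.
have inj : {in HPset n N j (fun X => P (e |: X)) &, injective (fun X => e |: X)}.
  move=> X1 X2; rewrite !inE => /andP [/andP [s1 _] _] /andP [/andP [s2 _] _] E.
  have e1 : e \notin X1 by apply: notin_lt => y /(subsetP s1); rewrite in_lt_set.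
  have e2 : e \notin X2 by apply: notin_lt => y /(subsetP s2); rewrite in_lt_set.
  by rewrite -(setU1K e1) -(setU1K e2) E.
rewrite -(card_in_imset inj); apply: subset_leq_card; apply/subsetP => Z.
case/imsetP => X; rewrite !inE => /andP [/andP [sX /eqP cX] PX] ->.
have eX : e \notin X by apply: notin_lt => y /(subsetP sX); rewrite in_lt_set.
rewrite PX setU11 cardsU1 eX cX eqxx !andbT; apply/subsetP => z; rewrite !inE.
case/orP => [/eqP -> | /(subsetP sX)]; first by rewrite eN.
by rewrite in_lt_set => /ltnW.
Qed.
End Step.

Lemma Lmain n N : forall j (P : pred {set 'I_n}) (F G : {set {set 'I_n}}),
  2*j <= N -> N <= n -> memb N j F -> memb N j G -> shifted G ->
  cross_intersecting F G -> Hcomp P N j ->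
  #|[set X in F | P X]| + #|[set X in G | P X]| <= #|HPset n N j P|.
Proof.
elim: N => [|N IH] [|j] P F G jN Nn mF mG sG cFG Hc.
- exact: L0.
- by move: jN; rewrite mulnS.
- exact: L0.
case: (ltngtP (2 * j.+1) N.+1) => [jN' | | jE].
- have Nn' : N < n by [].
  set e : 'I_n := Ordinal Nn'.
  have eN : val e = N by [].
  have jN2 : 2 * j.+1 <= N by [].
  apply: leq_trans (hP_split eN P j).
  apply: leq_trans (leq_add (cnt_split e P F) (cnt_split e P G)) _.
  rewrite addnACA; apply: leq_add.
    apply: IH => //; first exact: ltnW.
    - exact: memb0.
    - exact: memb0.
    - exact: shifted0 mG sG.
    - by move=> X Y; rewrite !inE => /andP [XF _] /andP [YG _]; apply: cFG.
    - exact: Hcomp0.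
  apply: (IH j (fun X => P (e |: X))).
  - by apply: leq_trans jN2; rewrite leq_mul2l leqnSn orbT.
  - exact: ltnW.
  - exact: memb1.
  - exact: memb1.
  - exact: shifted1 mG sG.
  - exact: cross1 (ltnW Nn') jN2 mF mG sG cFG.
  - exact: Hcomp1.
- by rewrite ltnNge jN.
- move: mF mG Hc; rewrite -jE => mF mG Hc.
  by apply: Lbase => //; rewrite jE.
Qed.

Lemma cardsU_disj (T : finType) (A B : {set T}) :
  (forall z, z \in A -> z \in B -> False) -> #|A :|: B| = #|A| + #|B|.
Proof.
move=> H; rewrite cardsU.
suff -> : A :&: B = set0 by rewrite cards0 subn0.
by apply/setP => z; rewrite !inE; apply/negP => /andP [/H za /za].
Qed.

Definition Pk n s (Z : {set 'I_n}) :=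
  (2 <= #|Z :&: lt_set n s|) && (#|Z :&: lt_set n s| + 2 <= s).

Lemma Hcomp_Pk n s N j : s <= n -> Hcomp (@Pk n s) N j.
Proof.
move=> sn m X Y mj sX cX Yel cY.
set S := lt_set n s.
have cS : #|S| = s by rewrite card_lt_set (minn_idPl sn).
rewrite /Pk -/S.
case: (leqP s (2*m)) => sm.
  have YS : forall Z, (Z :|: Y) :&: S = Z :&: S.
    move=> Z; rewrite setIUl; suff -> : Y :&: S = set0 by rewrite setU0.
    apply/setP => z; rewrite !inE; apply/negP => /andP [/Yel /andP [mz _] zs].
    by move: (leq_trans sm mz); rewrite leqNgt zs.
  rewrite !YS.
  have -> : (lt_set n (2 * m) :\: X) :&: S = S :\: X.
    apply/setP => z; rewrite !inE; case: (ltnP z s) => zs; rewrite ?andbF ?andbT //.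
    by rewrite (leq_trans zs sm) andbT.
  have : #|S :\: X| + #|X :&: S| = s by rewrite setIC -cS addnC cardsID.
  lia.
have XS : X \subset S.
  by apply: subset_trans sX _; apply/subsetP => z; rewrite !in_lt_set => /leq_trans; apply; apply: ltnW.
have e1 : (X :|: Y) :&: S = X :|: (Y :&: S) by rewrite setIUl (setIidPl XS).
have e2 : ((lt_set n (2 * m) :\: X) :|: Y) :&: S = (lt_set n (2 * m) :\: X) :|: (Y :&: S).
  rewrite setIUl; congr (_ :|: _); apply/setIidPl; apply: subset_trans (subsetDl _ _) _.
  by apply/subsetP => z; rewrite !in_lt_set => /leq_trans; apply; apply: ltnW.
have dis : forall Z : {set 'I_n}, Z \subset lt_set n (2*m) -> #|Z :|: (Y :&: S)| = #|Z| + #|Y :&: S|.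
  move=> Z sZ; apply: cardsU_disj => z /(subsetP sZ); rewrite in_lt_set inE => zm /andP [/Yel].
  by rewrite leqNgt zm.
rewrite e1 e2 !dis ?subsetDl //.
have -> : #|lt_set n (2 * m) :\: X| = m.
  have mn : 2 * m <= n by apply: leq_trans (ltnW sm) sn.
  rewrite cardsD (setIidPr sX) card_lt_set cX (minn_idPl mn); lia.
by rewrite cX.
Qed.

Lemma fiber_sum (T : finType) (A : {set T}) (f : T -> nat) a b :
  #|[set x in A | (a <= f x) && (f x < b)]| = \sum_(a <= i < b) #|[set x in A | f x == i]|.
Proof.
elim: b => [|b IH].
  rewrite big_geq // (_ : [set x in A | _] = set0) ?cards0 //.
  by apply/setP => x; rewrite !inE ltn0 !andbF.
case: (leqP a b) => ab.
  rewrite big_nat_recr //= -IH -cardsU_disj.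
    apply: eq_card => x; rewrite !inE ltnS (leq_eqVlt (f x)).
    case: (eqVneq (f x) b) => [-> | _] /=.
    1: by case: (x \in A); rewrite ab ltnn.
    by rewrite andbF orbF.
  by move=> x; rewrite !inE => /andP [_ /andP [_ lt]] /andP [_ /eqP eq]; move: lt; rewrite eq ltnn.
rewrite big_geq // (_ : [set x in A | _] = set0) ?cards0 //.
apply/setP => x; rewrite !inE; case: (leqP a (f x)) => af; rewrite ?andbF //.
by rewrite ltnS leqNgt (leq_trans ab af) !andbF.
Qed.

Lemma fiber_bound n (S : {set 'I_n}) k i :
  #|[set X : {set 'I_n} | (#|X| == k) && (#|X :&: S| == i)]| <= 'C(#|S|, i) * 'C(n - #|S|, k - i).
Proof.
set D := [set X : {set 'I_n} | _].
set D1 := [set A : {set 'I_n} | A \subset S & (#|A| == i)].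
set D2 := [set B : {set 'I_n} | B \subset ~: S & (#|B| == k - i)].
have inj : {in D &, injective (fun X => (X :&: S, X :\: S))}.
  move=> X1 X2 _ _ [E1 E2].
  by rewrite -(setID X1 S) -(setID X2 S) E1 E2.
rewrite -(card_in_imset inj).
have -> : 'C(#|S|, i) * 'C(n - #|S|, k - i) = #|setX D1 D2|.
  rewrite cardsX /D1 /D2 !cards_draws; congr (_ * 'C(_, _)).
  by rewrite -[n in n - _](card_ord n) -(cardsC S) addKn.
apply: subset_leq_card; apply/subsetP => Z /imsetP [X]; rewrite inE => /andP [/eqP cX /eqP cXS] ->.
rewrite !inE subsetIr cXS eqxx /=; apply/andP; split.
  by apply/subsetP => z; rewrite !inE => /andP [].
by rewrite -cX -cXS -(cardsID S X) addKn.
Qed.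

Lemma T_in n k (FF : {set {set 'I_n}}) : k.+1 <= n ->
  uniform k FF -> initial k FF -> non_trivial FF ->
  forall a, a \in lt_set n k.+1 -> lt_set n k.+1 :\ a \in FF.
Proof.
move=> kn uF iF [ne cap] a aS.
have n0 : 0 < n by apply: leq_trans kn.
pose o0 : 'I_n := Ordinal n0.
have [F0 F0F oF0] : exists2 F0, F0 \in FF & o0 \notin F0.
  case: (boolP [exists F0, (F0 \in FF) && (o0 \notin F0)]).
    by case/existsP => F0 /andP [? ?]; exists F0.
  move/existsPn => H.
  have : o0 \in \bigcap_(F in FF) F.
    by apply/bigcapP => F FF'; move: (H F); rewrite FF' /= negbK.
  by rewrite cap inE.
set S := lt_set n k.+1.
have cS : #|S| = k.+1 by rewrite card_lt_set (minn_idPl kn).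
have cSa : #|S :\ a| = k by move: cS; rewrite (cardsD1 a S) aS add1n => [[]].
apply: (iF _ F0) => //; first exact: uF.
apply: shift_le_count; first by rewrite cSa uF.
move=> t.
have c1k : #|F0 :&: lt_set n t| <= k by rewrite -(uF F0 F0F); apply: subset_leq_card; apply: subsetIl.
have c1L : #|F0 :&: lt_set n t| <= #|lt_set n t :\ o0|.
  apply: subset_leq_card; apply/subsetP => z; rewrite !inE => /andP [zF ->]; rewrite andbT.
  by apply/eqP => zo; move: oF0; rewrite -zo zF.
have L1 : minn t n = (0 < t) + #|lt_set n t :\ o0|.
  by rewrite -card_lt_set (cardsD1 o0 (lt_set n t)) in_lt_set.
have c2M : #|(S :&: lt_set n t) :\ a| <= #|(S :\ a) :&: lt_set n t|.
  by apply: subset_leq_card; apply/subsetP => z; rewrite !inE => /andP [-> /andP [-> ->]].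
have SI : S :&: lt_set n t = lt_set n (minn k.+1 t).
  by apply/setP => z; rewrite !inE leq_min.
have M1 : minn (minn k.+1 t) n = (a \in lt_set n (minn k.+1 t)) + #|(S :&: lt_set n t) :\ a|.
  by rewrite -card_lt_set -SI (cardsD1 a (S :&: lt_set n t)).
have : minn (minn k.+1 t) n = minn k.+1 t.
  by apply/minn_idPl; apply: leq_trans (geq_minl _ _) kn.
have hb : nat_of_bool (a \in lt_set n (minn k.+1 t)) <= 1 by case: (a \in _).
move: M1 hb; set ba := nat_of_bool _ => M1 hb.
case: (posnP t) => [t0 | tp].
  by move: L1 c1L; rewrite t0 /= => L1 c1L; lia.
rewrite tp add1n in L1; move=> h; lia.
Qed.

Lemma split_card (T : finType) (A : {set T}) (p : pred T) :
  #|A| = #|[set x in A | p x]| + #|[set x in A | ~~ p x]|.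
Proof.
rewrite -(cardsID [set x | p x] A); congr (_ + _); apply: eq_card => x; rewrite !inE //.
by rewrite andbC.
Qed.

Theorem theorem1p6 (n k : nat) (FF GG : {set {set 'I_n}}) :
  4 <= 2 * k -> 2 * k <= n ->
  uniform k FF -> uniform k GG ->
  non_trivial FF -> non_trivial GG ->
  cross_intersecting FF GG ->
  initial k FF -> initial k GG ->
  #|FF| + #|GG| <= k + 1 + \sum_(2 <= i < k.+1) 'C(k.+1, i) * 'C(n - k - 1, k - i).
Proof.
move=> k4 kn uF uG ntF ntG cFG iF iG.
have kn1 : k.+1 <= n by lia.
have k2 : 2 <= k by lia.
have n0 : 0 < n by lia.
set S := lt_set n k.+1.
have cS : #|S| = k.+1 by rewrite card_lt_set (minn_idPl kn1).
set P := @Pk n k.+1.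
have TF := T_in kn1 uF iF ntF; have TG := T_in kn1 uG iG ntG.
have two : forall (A B : {set {set 'I_n}}), cross_intersecting A B ->
    (forall a, a \in S -> S :\ a \in B) -> forall X, X \in A -> 2 <= #|X :&: S|.
  move=> A B cAB TB X XA; rewrite leqNgt; apply/negP => small.
  have [a aS ca] : exists2 a, a \in S & #|(X :&: S) :\ a| = 0.
    case: (set_0Vmem (X :&: S)) => [E | [a aXS]].
      exists (Ordinal n0); first by rewrite in_lt_set.
      by rewrite E; apply/eqP; rewrite cards_eq0; apply/eqP/setP => z; rewrite !inE andbF.
    exists a; first by move: aXS; rewrite inE => /andP [].
    by move: small; rewrite (cardsD1 a (X :&: S)) aXS; lia.
  have := cAB X _ XA (TB a aS); rewrite setIDA.
  by move/cards0_eq: ca => ->; rewrite eqxx.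
have cGF : cross_intersecting GG FF by move=> X Y XG YF; rewrite setIC; apply: cFG.
have memA : forall A : {set {set 'I_n}}, uniform k A -> memb n k A.
  move=> A uA X XA; split; last exact: uA.
  by apply/subsetP => z _; rewrite in_lt_set.
have HL := @Lmain n n k P FF GG kn (leqnn n) (memA _ uF) (memA _ uG) (initial_shifted uG iG) cFG
  (@Hcomp_Pk n k.+1 n k kn1).
have notP : forall A : {set {set 'I_n}}, uniform k A -> (forall X, X \in A -> 2 <= #|X :&: S|) ->
    #|[set X in A | ~~ P X]| <= k.+1.
  move=> A uA tA.
  rewrite -[k.+1]binSn -cS -cards_draws; apply: subset_leq_card; apply/subsetP => X.
  rewrite !inE => /andP [XA nP].
  have t2 := tA X XA; have cX := uA X XA.
  have le : #|X :&: S| <= #|X| by apply: subset_leq_card; apply: subsetIl.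
  have eq : #|X :&: S| = #|X|.
    move: nP; rewrite /P /Pk -/S t2 /= -ltnNge => h.
    have h2 : k.+1 < #|X :&: S| + 2 := h.
    by apply/eqP; rewrite eqn_leq le cX /=; move: h2; rewrite addn2 !ltnS.
  rewrite cX eqxx andbT; apply/setIidPl/eqP; rewrite eqEcard subsetIl /=.
  by rewrite eq.
have hP : #|HPset n n k P| <= \sum_(2 <= i < k) 'C(k.+1, i) * 'C(n - k - 1, k - i).
  pose D := [set X : {set 'I_n} | #|X| == k].
  pose f := fun X : {set 'I_n} => #|X :&: S|.
  apply: (@leq_trans #|[set X in D | (2 <= f X) && (f X < k)]|).
    apply: subset_leq_card; apply/subsetP => X; rewrite !inE /P /Pk -/S /f.
    by case/andP => /andP [_ ->] /andP [-> h] /=; move: h; rewrite addn2 ltnS.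
  rewrite fiber_sum; apply: leq_sum => i _.
  have := fiber_bound S k i; rewrite cS => fb.
  have -> : n - k - 1 = n - k.+1 by lia.
  apply: leq_trans _ fb.
  by apply: eq_leq; apply: eq_card => X; rewrite !inE.
rewrite big_nat_recr //= subnn bin0 muln1 binSn.
rewrite (split_card FF P) (split_card GG P).
have := notP _ uF (two _ _ cFG TG); have := notP _ uG (two _ _ cGF TF).
lia.
Qed.
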